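(* Let $G$ be a group and $(\rho,V)$ a linear representation of $G$ on a finite-dimensional vector space $V$ over a field $k$. Let $A$ be a nonempty finite subset of $G$ and $Y$ a $k$-subspace of $V$ with $\dim\langle A\cdot Y\rangle\leq\alpha|A|$ for some $\alpha\in\mathbb{R}_{\geq0}$. Then there exists a nonempty subset $B\subset A$ such that $\dim\langle CB\cdot Y\rangle\leq\alpha|CB|$ for every finite subset $C$ of $G$.
   Context: $g\cdot v=\rho(g)v$; for $S\subset G$, $\langle S\cdot Y\rangle$ is the $k$-span of $\{s\cdot v\mid s\in S,v\in Y\}$; $CB=\{cb\mid c\in C,b\in B\}$. *)

(* Defs.v *)
From HB Require Import structures.
From mathcomp Require Import all_boot all_order all_algebra.
From mathcomp Require Import finmap.
From mathcomp Require Import reals.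
Set Implicit Arguments. Unset Strict Implicit. Unset Printing Implicit Defensive.
Import Order.TTheory GRing.Theory Num.Theory.
Local Open Scope ring_scope.
Local Open Scope fset_scope.

Definition is_group (G : Type) (mul : G -> G -> G) (one : G) (inv : G -> G) : Prop :=
  [/\ forall x y z, mul x (mul y z) = mul (mul x y) z,
      forall x, mul one x = x,
      forall x, mul x one = x,
      forall x, mul (inv x) x = one &
      forall x, mul x (inv x) = one].

Definition is_representation (G : Type) (mul : G -> G -> G) (one : G)
    (k : fieldType) (V : vectType k) (rho : G -> 'End(V)) : Prop :=
  (forall g h, rho (mul g h) = (rho g \o rho h)%VF) /\ rho one = \1%VF.

Definition span_act (G : choiceType) (k : fieldType) (V : vectType k)
    (rho : G -> 'End(V)) (S : {fset G}) (Y : {vspace V}) : {vspace V} :=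
  (\sum_(s <- S) (rho s @: Y))%VS.

Definition fset_prod (G : choiceType) (mul : G -> G -> G) (C B : {fset G}) : {fset G} :=
  [fset mul c b | c in C, b in B].

(* Main.v *)
Require Import Defs.
From HB Require Import structures.
From mathcomp Require Import all_boot all_order all_algebra.
From mathcomp Require Import finmap.
From mathcomp Require Import reals.
From mathcomp Require Import lra.
Import Order.TTheory GRing.Theory Num.Theory.
Local Open Scope ring_scope.
Local Open Scope fset_scope.

Lemma span_sub (G : choiceType) (k : fieldType) (V : vectType k)
    (rho : G -> 'End(V)) (S : {fset G}) (Y W : {vspace V}) :
  (forall s, s \in S -> (rho s @: Y <= W)%VS) -> (span_act rho S Y <= W)%VS.
Proof.
move=> H; rewrite /span_act big_seq; elim/big_rec: _ => [|i U Hi HU].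
  by rewrite sub0v.
by rewrite subv_add H.
Qed.

Lemma span_sup (G : choiceType) (k : fieldType) (V : vectType k)
    (rho : G -> 'End(V)) (S : {fset G}) (Y : {vspace V}) s :
  s \in S -> (rho s @: Y <= span_act rho S Y)%VS.
Proof. by move=> sS; rewrite /span_act (big_rem s) //= addvSl. Qed.

Lemma span_mono (G : choiceType) (k : fieldType) (V : vectType k)
    (rho : G -> 'End(V)) (S T : {fset G}) (Y : {vspace V}) :
  S `<=` T -> (span_act rho S Y <= span_act rho T Y)%VS.
Proof. by move=> /fsubsetP ST; apply: span_sub => s /ST; apply: span_sup. Qed.

Lemma span_U (G : choiceType) (k : fieldType) (V : vectType k)
    (rho : G -> 'End(V)) (S T : {fset G}) (Y : {vspace V}) :
  (span_act rho (S `|` T) Y <= span_act rho S Y + span_act rho T Y)%VS.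
Proof.
apply: span_sub => s /fsetUP [] sS.
  by apply: subv_trans (addvSl _ _); apply: span_sup.
by apply: subv_trans (addvSr _ _); apply: span_sup.
Qed.

Lemma span0 (G : choiceType) (k : fieldType) (V : vectType k)
    (rho : G -> 'End(V)) (Y : {vspace V}) :
  span_act rho fset0 Y = 0%VS.
Proof. by apply/eqP; rewrite -subv0; apply: span_sub => s; rewrite inE. Qed.

Lemma span_gl (G : choiceType) (mul : G -> G -> G) (one : G) (inv : G -> G)
    (k : fieldType) (V : vectType k) (rho : G -> 'End(V)) (Y : {vspace V}) c S :
  is_group mul one inv -> is_representation mul one rho ->
  span_act rho [fset mul c b | b in S] Y = (rho c @: span_act rho S Y)%VS.
Proof.
move=> [h1 h2 h3 h4 h5] [r1 r2]; apply/eqP; rewrite eqEsubv; apply/andP; split.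
  apply: span_sub => s /imfsetP [b /= bS ->].
  by rewrite r1 limg_comp limgS // span_sup.
rewrite /span_act limg_sum big_seq; elim/big_rec: _ => [|i U Hi HU].
  by rewrite sub0v.
rewrite subv_add HU andbT -limg_comp -r1.
by apply: span_sup; apply/imfsetP; exists i.
Qed.

Lemma dim_rho (G : choiceType) (mul : G -> G -> G) (one : G) (inv : G -> G)
    (k : fieldType) (V : vectType k) (rho : G -> 'End(V)) c (U : {vspace V}) :
  is_group mul one inv -> is_representation mul one rho ->
  \dim (rho c @: U)%VS = \dim U.
Proof.
move=> [h1 h2 h3 h4 h5] [r1 r2].
have le (f : 'End(V)) (W : {vspace V}) : (\dim (f @: W)%VS <= \dim W)%N.
  by rewrite -(limg_ker_dim f W) leq_addl.
apply/eqP; rewrite eqn_leq; apply/andP; split; first exact: le.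
have E : (rho (inv c) @: (rho c @: U))%VS = U.
  by rewrite -limg_comp -r1 h4 r2 lim1g.
by rewrite -{1}E; apply: le.
Qed.

Lemma card_gl (G : choiceType) (mul : G -> G -> G) (one : G) (inv : G -> G) c S :
  is_group mul one inv -> #|` [fset mul c b | b in S]| = #|` S|.
Proof.
move=> [h1 h2 h3 h4 h5]; rewrite card_imfset //=.
by move=> x y E; rewrite -(h2 x) -(h4 c) -h1 E h1 h4 h2.
Qed.

Lemma seq_min (R : realType) (T : eqType) (r : T -> R) (s : seq T) x0 :
  x0 \in s -> exists2 x, x \in s & forall y, y \in s -> r x <= r y.
Proof.
elim: s x0 => // a s IH x0 _.
case: s IH => [|b s] IH.
  by exists a; [rewrite mem_head | move=> y; rewrite inE => /eqP->].
have [x xs hx] := IH b (mem_head _ _).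
case: (leP (r a) (r x)) => h.
  exists a; first exact: mem_head.
  by move=> y; rewrite inE => /orP[/eqP->//|/hx]; apply: le_trans.
exists x; first by rewrite inE xs orbT.
by move=> y; rewrite inE => /orP[/eqP->|/hx//]; apply: ltW.
Qed.

Theorem mainTheorem13 (G : choiceType) (mul : G -> G -> G) (one : G) (inv : G -> G)
    (k : fieldType) (V : vectType k) (rho : G -> 'End(V)) (R : realType) (alpha : R)
    (A : {fset G}) (Y : {vspace V}) :
  is_group mul one inv ->
  is_representation mul one rho ->
  A != fset0 ->
  0 <= alpha ->
  (\dim (span_act rho A Y))%:R <= alpha * (#|` A|)%:R ->
  exists B : {fset G},
    [/\ B != fset0, (B `<=` A)%fset &
        forall C : {fset G},
          (\dim (span_act rho (fset_prod mul C B) Y))%:R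
            <= alpha * (#|` fset_prod mul C B|)%:R].
Proof.
move=> hG hR An0 al0 hA.
pose f S := \dim (span_act rho S Y).
pose r (S : {fset G}) : R := (f S)%:R / (#|` S|)%:R.
pose cand := [seq S <- enum_fset (fpowerset A) | S != fset0].
have Ac : A \in cand by rewrite mem_filter An0 /= fpowersetE fsubset_refl.
have [B Bc minB] := @seq_min R _ r _ _ Ac.
move: Bc; rewrite mem_filter fpowersetE => /andP[Bn0 BA].
have cB : 0 < (#|` B|)%:R :> R by rewrite ltr0n cardfs_gt0.
have cA : 0 < (#|` A|)%:R :> R by rewrite ltr0n cardfs_gt0.
pose beta := r B.
have fB : (f B)%:R = beta * (#|` B|)%:R by rewrite /beta /r divfK // lt0r_neq0.
have sub : forall B', B' `<=` B -> beta * (#|` B'|)%:R <= (f B')%:R.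
  move=> B' sB'; have [->|B'n0] := eqVneq B' fset0.
    by rewrite cardfs0 mulr0 ler0n.
  have cB' : 0 < (#|` B'|)%:R :> R by rewrite ltr0n cardfs_gt0.
  have := minB B'; rewrite mem_filter B'n0 fpowersetE (fsubset_trans sB' BA).
  by move=> /(_ isT); rewrite /r -/(r B) -/beta ler_pdivlMr.
have bA : beta <= alpha.
  by apply: le_trans (minB A Ac) _; rewrite /r ler_pdivrMr.
have claim : forall C, (f (fset_prod mul C B))%:R <= beta * (#|` fset_prod mul C B|)%:R.
  elim/fset1U_rect => [|c C cC IH].
    have -> : fset_prod mul fset0 B = fset0.
      apply/fsetP => x; rewrite inE; apply/negbTE/negP; move/imfset2P => [y].
      by rewrite inE.
    by rewrite /f span0 dimv0 cardfs0 mulr0.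
  set X := fset_prod mul C B.
  set Z := [fset mul c b | b in B].
  have E1 : fset_prod mul (c |` C) B = Z `|` X.
    apply/fsetP => x; apply/imfset2P/fsetUP.
      move=> [c' /= /fset1UP [->|c'C] [b /= bB ->]].
        by left; apply/imfsetP; exists b.
      by right; apply/imfset2P; exists c' => //; exists b.
    case => [/imfsetP [b /= bB ->]|/imfset2P [c' /= c'C [b /= bB ->]]].
      by exists c; [apply: fset1U1 | exists b].
    by exists c'; [apply/fset1UP; right | exists b].
  pose B'' := [fset b in B | mul c b \in X].
  have E2 : Z `&` X = [fset mul c b | b in B''].
    apply/fsetP => x; rewrite in_fsetI; apply/andP/imfsetP.
      by move=> [/imfsetP [b /= bB ->] hX]; exists b => //; rewrite !inE bB hX.
    move=> [b /=]; rewrite !inE => /andP[bB hX] ->; split => //.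
    by apply/imfsetP; exists b.
  have cardZ : #|` Z| = #|` B| := card_gl _ mul one inv c B hG.
  have fZ : f Z = f B by rewrite /f (span_gl _ mul one inv) // (dim_rho _ mul one inv) //.
  have hI : beta * (#|` Z `&` X|)%:R <= (f (Z `&` X))%:R.
    rewrite E2 (card_gl _ mul one inv _ _ hG) /f (span_gl _ mul one inv) // (dim_rho _ mul one inv) //.
    by apply: sub; apply/fsubsetP => b; rewrite inE => /andP[].
  have sm : (f (Z `|` X) + f (Z `&` X) <= f Z + f X)%N.
    rewrite /f -(dimv_sum_cap (span_act rho Z Y) (span_act rho X Y)) leq_add // dimvS //; first exact: span_U.
    by rewrite subv_cap !span_mono ?fsubsetIl ?fsubsetIr.
  have cu := cardfsUI Z X.
  have ec : ((#|` Z `|` X|)%:R = (#|` Z|)%:R + (#|` X|)%:R - (#|` Z `&` X|)%:R :> R)%R.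
    by rewrite -natrD -cu natrD addrK.
  have smR : ((f (Z `|` X))%:R + (f (Z `&` X))%:R <= (f Z)%:R + (f X)%:R :> R)%R.
    by rewrite -!natrD ler_nat.
  rewrite E1 ec mulrBr mulrDr cardZ -fB -fZ.
  move: IH; rewrite -/X => IH.
  set a1 := (f (Z `|` X))%:R in smR *.
  set a2 := (f (Z `&` X))%:R in smR hI *.
  set a3 := (f Z)%:R in smR *.
  set a4 := (f X)%:R in smR IH *.
  set a5 := beta * _ in IH *.
  set a6 := beta * _ in hI *.
  clearbody a1 a2 a3 a4 a5 a6; clear -smR IH hI; lra.

exists B; split => // C; apply: le_trans (claim C) _; apply: ler_wpM2r => //.
Qed.
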